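(* Consider a link of constant bit rate $c>0$ shared by several FIFO queues under non-preemptive strict priority scheduling, and consider the highest-priority queue, whose input flow consists of packets of positive length. Let $l^{M_l}$ denote the maximum packet length of all lower-priority queues. Then $\beta(t)=c\left(t-\frac{l^{M_l}}{c}\right)^{+}$ is neither a strict service curve nor a service curve for the highest-priority queue; that is, there exist traffic patterns for which the strict service curve inequality fails and traffic patterns and times $t\ge0$ with $A^{*}(t)<\inf_{0\le s\le t}\{A(s)+\beta(t-s)\}$, where $A,A^{*}$ are the cumulative input and output of the highest-priority queue.
   Context: $(x)^{+}=\max\{x,0\}$. Non-preemptive strict priority: whenever the link is free, it starts transmitting the head packet of the highest-priority nonempty queue; a packet in transmission is never interrupted. Packets have arrival times $a(n)$, departure times $d(n)$ and lengths $l(n)>0$ bits. By convention, a packet is said to have arrived (respectively, been served) when and only when its last bit has arrived (respectively, departed). $A(t)$ is the cumulative amount of traffic (sum of packet lengths) of the highest-priority flow that has arrived in $[0,t)$ and $A^{*}(t)$ the amount that has been served in $[0,t)$; $A(0)=A^{*}(0)=0$, $A(s,t)=A(t)-A(s)$, $A^{*}(s,t)=A^{*}(t)-A^{*}(s)$. Queues have infinite buffers and are initially empty. With $\mathcal{F}_0$ the set of nonnegative nondecreasing functions vanishing at $0$, $\beta\in\mathcal{F}_0$ is a service curve if $A^{*}(t)\ge\inf_{0\le s\le t}\{A(s)+\beta(t-s)\}$ for all $t\ge0$, and a strict service curve if for every backlogged period $(s,t]$ of the queue, $A^{*}(s,t)\ge\beta(t-s)$. *)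

(* Defs.v *)
From HB Require Import structures.
From mathcomp Require Import all_boot all_order all_algebra.
From mathcomp Require Import boolp classical_sets reals.
Set Implicit Arguments. Unset Strict Implicit. Unset Printing Implicit Defensive.
Import Order.TTheory GRing.Theory Num.Theory.
Local Open Scope ring_scope.
Local Open Scope classical_set_scope.

(* A (finite) traffic pattern together with its transmission schedule on a
   link shared by k.+1 FIFO queues; queue 0 is the highest priority,
   a smaller queue index means a higher priority. *)
Record pattern (R : realType) (k : nat) := Pattern {
  np    : nat;
  queue : 'I_np -> 'I_k.+1;
  arr   : 'I_np -> R;         (* arrival time a(n) (last bit arrived) *)
  len   : 'I_np -> R;
  start : 'I_np -> R
}.

Section Defs.
Variables (R : realType) (k : nat).
Implicit Types (P : pattern R k) (c : R).

Definition dep c P (n : 'I_(np P)) : R := start n + len n / c.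

(* P is an execution of a constant-rate-c link under non-preemptive
   strict priority scheduling with FIFO queues (infinite buffers, initially
   empty, work conserving). *)
Definition valid_npsp c P : Prop :=
  (forall n : 'I_(np P), 0 <= arr n) /\
  (forall n : 'I_(np P), 0 < len n) /\
      (* store and forward: a packet can be sent only once it has arrived *)
      (forall n : 'I_(np P), arr n <= start n) /\
      (* one packet at a time, each sent without interruption at rate c *)
      (forall m n : 'I_(np P), m != n -> dep c m <= start n \/ dep c n <= start m) /\
      (* FIFO within each queue *)
      (forall m n : 'I_(np P), queue m = queue n -> arr m < arr n -> start m < start n) /\
      (* strict priority: when n starts, no higher-priority packet waits *)
      (forall m n : 'I_(np P), (queue m < queue n)%N -> arr m <= start n -> start m < start n) /\
      (* work conserving: the link is busy whenever some packet waits *)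
      (forall (t : R) (n : 'I_(np P)), arr n <= t < start n ->
         exists m : 'I_(np P), start m <= t < dep c m).

(* cumulative arrivals / departures of the highest-priority flow in [0,t) *)
Definition Acum P (t : R) : R :=
  \sum_(n < np P | (queue n == ord0) && (arr n < t)) len n.
Definition Adep c P (t : R) : R :=
  \sum_(n < np P | (queue n == ord0) && (dep c n < t)) len n.

Definition lmax_low P : R :=
  \big[Num.max/0]_(n < np P | queue n != ord0) len n.

End Defs.

Definition posp (R : realType) (x : R) : R := Num.max x 0.

Definition beta_npsp (R : realType) (c L : R) (t : R) : R := c * posp (t - L / c).

Definition service_curve (R : realType) (A Astar beta : R -> R) : Prop :=
  forall t, 0 <= t -> inf [set A s + beta (t - s) | s in [set s | 0 <= s <= t]] <= Astar t.

(* (s,t] is a backlogged period: the queue is nonempty at every u in (s,t] *)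
Definition backlogged (R : realType) (A Astar : R -> R) (s t : R) : Prop :=
  0 <= s <= t /\ forall u, s < u <= t -> Astar u < A u.

Definition strict_service_curve (R : realType) (A Astar beta : R -> R) : Prop :=
  forall s t, backlogged A Astar s t -> beta (t - s) <= Astar t - Astar s.

(* Main.v *)
Require Import Defs.
From HB Require Import structures.
From mathcomp Require Import all_boot all_order all_algebra.
From mathcomp Require Import boolp classical_sets reals.
From mathcomp Require Import lra.
Import Order.TTheory GRing.Theory Num.Theory.
Local Open Scope ring_scope.

Section Ex.
Variables (R : realType) (k : nat) (c L : R).
Hypotheses (hk : (0 < k)%N) (hc : 0 < c) (hL : 0 < L).

Let q1 : 'I_k.+1 := Ordinal (hk : (1 < k.+1)%N).
Let d : R := L / c.

Definition exP : pattern R k :=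
  @Pattern R k 2
    (fun i => if val i == 0%N then ord0 else q1)
    (fun i => if val i == 0%N then d / 2 else 0)
    (fun i => L)
    (fun i => if val i == 0%N then d else 0).

Lemma d_gt0 : 0 < d. Proof. by rewrite /d divr_gt0. Qed.
Lemma cd : c * d = L. Proof. rewrite /d mulrC divfK //; exact: lt0r_neq0. Qed.

Lemma AcumE s : Acum exP s = if d / 2 < s then L else 0.
Proof.
rewrite /Acum big_mkcond /= !big_ord_recl big_ord0 /=.
case: ifP => _; rewrite ?addr0 //.
Qed.

Lemma AdepE t : Adep c exP t = if 2 * d < t then L else 0.
Proof.
rewrite /Adep big_mkcond /= !big_ord_recl big_ord0 /= /dep /=.
have -> : d + L / c = 2 * d by rewrite /d; lra.
case: ifP => _; rewrite ?addr0 //.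
Qed.

Lemma lmaxE : lmax_low exP = L.
Proof.
rewrite /lmax_low unlock /= /index_enum /= -enumT !enum_ordSl enum_ord0 /=.
rewrite max_l //; exact: ltW.
Qed.

Lemma cd2 : c * (d / 2) = L / 2. Proof. by rewrite mulrA cd. Qed.

Lemma validP : valid_npsp c exP.
Proof.
have d0 := d_gt0.
rewrite /valid_npsp /dep /=; rewrite -/d.
split; [|split;[|split;[|split;[|split;[|split]]]]].
- case=> [[|[|//]]] ? /=; lra.
- by move=> _.
- case=> [[|[|//]]] ? /=; lra.
- case=> [[|[|//]]] ? [[|[|//]]] ? //= _; [right|left]; lra.
- case=> [[|[|//]]] ? [[|[|//]]] ? //=; try lra;
  by move=> /(congr1 val).
- case=> [[|[|//]]] ? [[|[|//]]] ? //= _; lra.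
- move=> t; case=> [[|[|//]]] ? /= /andP[h1 h2]; last lra.
  exists (Ordinal (isT : (1 < 2)%N)) => /=; apply/andP; split; lra.
Qed.
End Ex.

Theorem proposition3 (R : realType) (k : nat) (c L : R) :
  (0 < k)%N -> 0 < c -> 0 < L ->
  (exists P : pattern R k,
     [/\ valid_npsp c P, lmax_low P = L &
         ~ strict_service_curve (Acum P) (Adep c P) (beta_npsp c L)]) /\
  (exists P : pattern R k,
     [/\ valid_npsp c P, lmax_low P = L &
         exists t, 0 <= t /\
           Adep c P t < inf [set Acum P s + beta_npsp c L (t - s) | s in [set s | 0 <= s <= t]]]).
Proof.
move=> hk hc hL.
have d0 := @d_gt0 R c L hc hL.
have e := @cd2 R c L hc.
have AE := @AcumE R k c L hk. have DE := @AdepE R k c L hk.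
have VP := @validP R k c L hk hc hL. have LE := @lmaxE R k c L hk hL.
set d := L / c in d0 e AE DE.
split; exists (exP R k c L hk); split => //.
- move/(_ (d/2) (2*d)).
  have -> : 2 * d - d / 2 = d + d / 2 by lra.
  rewrite /beta_npsp /posp !DE ltxx ifF; last by apply/negbTE; rewrite -leNgt; lra.
  have -> : d + d / 2 - L / c = d / 2 by rewrite -/d; lra.
  rewrite max_l; last lra.
  rewrite e subrr => H.
  have : L / 2 <= 0.
    apply: H; split; first (apply/andP; split; lra).
    move=> u /andP[h1 h2]; rewrite AE DE h1 ifF; first lra.
    by apply/negbTE; rewrite -leNgt.
  lra.
- exists (2 * d); split; first lra.
  rewrite DE ltxx.
  apply: (@lt_le_trans _ _ (L / 2)); first lra.
  apply: lb_le_inf.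
    by exists (Acum (exP R k c L hk) 0 + beta_npsp c L (2 * d - 0)), 0 => //=; apply/andP; split; lra.
  move=> _ [s /andP[s0 s2] <-]; rewrite AE /beta_npsp /posp -/d.
  case: ifP => h.
    have : 0 <= c * Num.max (2 * d - s - d) 0.
      by apply: mulr_ge0; [exact: ltW | rewrite le_max lexx orbT].
    lra.
  rewrite add0r -e; apply: ler_wpM2l; first exact: ltW.
  rewrite le_max; apply/orP; left.
  move/negbT: h; rewrite -leNgt => h; lra.
Qed.
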